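(* The direct limit of a directed system $(G_i)_{i\in\mathbb{N}}$ of countable linear sofic groups (with group morphisms as connecting maps) is linear sofic.
   Context: A countable group is linear sofic if it admits an injective group morphism into $\prod_{k\to\omega}GL_{n_k}(\mathbb{C})/d_\omega$ for some non-principal ultrafilter $\omega$ on $\mathbb{N}$ and $n_k\to\infty$, where this is the quotient of $\prod_kGL_{n_k}(\mathbb{C})$ by $\{(a_k)_k:\lim_{k\to\omega}\rho(a_k-\mathrm{Id})=0\}$ and $\rho(a)=\operatorname{rk}(a)/n$ for $a\in M_n(\mathbb{C})$. *)

(* Defs.v *)
From HB Require Import structures.
From Stdlib Require Import Reals Lra ClassicalEpsilon FunctionalExtensionality.
From mathcomp Require Import all_boot all_order all_algebra.

Set Implicit Arguments.
Unset Strict Implicit.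
Unset Printing Implicit Defensive.

Record Cplx := mkC { Re : Rdefinitions.R ; Im : Rdefinitions.R }.

Lemma Cplx_ext (x y : Cplx) : Re x = Re y -> Im x = Im y -> x = y.
Proof. by case: x => a b; case: y => c d /= -> ->. Qed.

Definition Cplx_eqb (x y : Cplx) : bool :=
  if excluded_middle_informative (x = y) then true else false.

Lemma Cplx_eqP : Equality.axiom Cplx_eqb.
Proof.
move=> x y; rewrite /Cplx_eqb.
by case: excluded_middle_informative => h; constructor.
Qed.

HB.instance Definition _ := hasDecEq.Build Cplx Cplx_eqP.

Definition Cplx_find (P : pred Cplx) (_ : nat) : option Cplx :=
  match excluded_middle_informative (exists x, P x) with
  | left h => Some (proj1_sig (constructive_indefinite_description _ h))
  | right _ => None
  end.

Lemma Cplx_find_correct P n x : Cplx_find P n = Some x -> P x.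
Proof.
rewrite /Cplx_find; case: excluded_middle_informative => // h [<-].
exact: (proj2_sig (constructive_indefinite_description _ h)).
Qed.

Lemma Cplx_find_complete (P : pred Cplx) :
  (exists x, P x) -> exists n, Cplx_find P n.
Proof.
move=> h; exists 0%N; rewrite /Cplx_find.
by case: excluded_middle_informative.
Qed.

Lemma Cplx_find_ext (P Q : pred Cplx) : P =1 Q -> Cplx_find P =1 Cplx_find Q.
Proof.
move=> hPQ; have -> : P = Q by apply: functional_extensionality.
by [].
Qed.

HB.instance Definition _ :=
  hasChoice.Build Cplx Cplx_find_correct Cplx_find_complete Cplx_find_ext.

Local Open Scope R_scope.

Definition C0 : Cplx := mkC 0 0.
Definition C1 : Cplx := mkC 1 0.
Definition Cadd (x y : Cplx) : Cplx := mkC (Re x + Re y) (Im x + Im y).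
Definition Copp (x : Cplx) : Cplx := mkC (- Re x) (- Im x).
Definition Cmul (x y : Cplx) : Cplx :=
  mkC (Re x * Re y - Im x * Im y) (Re x * Im y + Im x * Re y).
Definition Cinv (x : Cplx) : Cplx :=
  mkC (Re x / (Re x * Re x + Im x * Im x))
      (- Im x / (Re x * Re x + Im x * Im x)).

Lemma CaddA : associative Cadd.
Proof. by move=> x y z; apply: Cplx_ext => /=; ring. Qed.
Lemma CaddC : commutative Cadd.
Proof. by move=> x y; apply: Cplx_ext => /=; ring. Qed.
Lemma Cadd0 : left_id C0 Cadd.
Proof. by move=> x; apply: Cplx_ext => /=; ring. Qed.
Lemma CaddN : left_inverse C0 Copp Cadd.
Proof. by move=> x; apply: Cplx_ext => /=; ring. Qed.

HB.instance Definition _ := GRing.isZmodule.Build Cplx CaddA CaddC Cadd0 CaddN.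

Lemma CmulA : associative Cmul.
Proof. by move=> x y z; apply: Cplx_ext => /=; ring. Qed.
Lemma CmulC : commutative Cmul.
Proof. by move=> x y; apply: Cplx_ext => /=; ring. Qed.
Lemma Cmul1 : left_id C1 Cmul.
Proof. by move=> x; apply: Cplx_ext => /=; ring. Qed.
Lemma CmulDl : left_distributive Cmul Cadd.
Proof. by move=> x y z; apply: Cplx_ext => /=; ring. Qed.
Lemma C1_neq0 : C1 != C0.
Proof. by apply/eqP => -[] /R1_neq_R0. Qed.

HB.instance Definition _ :=
  GRing.Zmodule_isComNzRing.Build Cplx CmulA CmulC Cmul1 CmulDl C1_neq0.

Lemma CmulV (x : Cplx) : x != 0%R -> GRing.mul (Cinv x) x = 1%R.
Proof.
case: x => a b /eqP hx.
have hn : a * a + b * b <> 0.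
  move=> h; apply: hx.
  have ha : a = 0 by nra.
  have hb : b = 0 by nra.
  by rewrite ha hb.
by apply: Cplx_ext => /=; field.
Qed.

Lemma Cinv0 : Cinv 0%R = 0%R.
Proof. by apply: Cplx_ext => /=; rewrite /Rdiv ?Ropp_0 Rmult_0_l. Qed.

HB.instance Definition _ := GRing.ComNzRing_isField.Build Cplx CmulV Cinv0.

Close Scope R_scope.
Import GRing.Theory.
Local Open Scope ring_scope.

Record group_on (T : Type) := GroupOn {
  gmul : T -> T -> T;
  gone : T;
  ginv : T -> T;
  gmulA : forall x y z, gmul x (gmul y z) = gmul (gmul x y) z;
  gmul1 : forall x, gmul gone x = x;
  gmulV : forall x, gmul (ginv x) x = gone
}.

Definition countable_type (T : Type) : Prop :=
  exists f : T -> nat, forall x y, f x = f y -> x = y.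

Definition is_group_morph (T U : Type) (gT : group_on T) (gU : group_on U)
  (f : T -> U) : Prop :=
  forall x y, f (gmul gT x y) = gmul gU (f x) (f y).

Definition nonprincipal_ultrafilter (U : (nat -> Prop) -> Prop) : Prop :=
  U (fun _ => True) /\
  ~ U (fun _ => False) /\
  (forall A B : nat -> Prop, U A -> (forall k, A k -> B k) -> U B) /\
  (forall A B : nat -> Prop, U A -> U B -> U (fun k => A k /\ B k)) /\
  (forall A : nat -> Prop, U A \/ U (fun k => ~ A k)) /\
  (forall m : nat, ~ U (fun k => k = m)).

Definition ulim0 (U : (nat -> Prop) -> Prop) (x : nat -> Rdefinitions.R) : Prop :=
  forall eps : Rdefinitions.R, Rlt 0 eps -> U (fun k => Rlt (Rabs (x k)) eps).

Definition rho (n : nat) (a : 'M[Cplx]_n) : Rdefinitions.R :=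
  Rdiv (INR (\rank a)) (INR n).

Definition tends_to_infty (n : nat -> nat) : Prop :=
  forall N : nat, exists K : nat, forall k : nat, (K <= k)%N -> (N <= n k)%N.

(* A countable group G is linear sofic if there is an injective group
   morphism G -> prod_{k -> U} GL_{n_k}(C) / d_U.  Such a morphism is given
   by a lift phi : G -> prod_k GL_{n_k}(C) (g |-> (phi g k)_k), which is
   multiplicative modulo the kernel N = {(a_k) : lim_U rho(a_k - Id) = 0}
   and injective modulo N. *)
Definition in_kernel (U : (nat -> Prop) -> Prop) (n : nat -> nat)
  (a : forall k, 'M[Cplx]_(n k)) : Prop :=
  ulim0 U (fun k => rho (a k - 1%:M)%R).

Definition linear_sofic (T : Type) (gT : group_on T) : Prop :=
  countable_type T /\
  exists (U : (nat -> Prop) -> Prop) (n : nat -> nat)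
         (phi : T -> forall k, 'M[Cplx]_(n k)),
    [/\ nonprincipal_ultrafilter U,
        tends_to_infty n,
        (forall g k, phi g k \in unitmx),
        (forall g h, in_kernel U
            (fun k => phi (gmul gT g h) k *m invmx (phi g k *m phi h k)))
      & (forall g h, g <> h ->
           ~ in_kernel U (fun k => phi g k *m invmx (phi h k)))].

Definition directed_system (G : nat -> Type) (gG : forall i, group_on (G i))
  (f : forall i j, (i <= j)%N -> G i -> G j) : Prop :=
  [/\ (forall i j (hij : (i <= j)%N), is_group_morph (gG i) (gG j) (f i j hij)),
      (forall i (hii : (i <= i)%N) x, f i i hii x = x)
    & (forall i j k (hij : (i <= j)%N) (hjk : (j <= k)%N) (hik : (i <= k)%N) x,
         f j k hjk (f i j hij x) = f i k hik x)].

Definition cocone (G : nat -> Type) (gG : forall i, group_on (G i))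
  (f : forall i j, (i <= j)%N -> G i -> G j)
  (H : Type) (gH : group_on H) (psi : forall i, G i -> H) : Prop :=
  (forall i, is_group_morph (gG i) gH (psi i)) /\
  (forall i j (hij : (i <= j)%N) x, psi j (f i j hij x) = psi i x).

Definition direct_limit (G : nat -> Type) (gG : forall i, group_on (G i))
  (f : forall i j, (i <= j)%N -> G i -> G j)
  (L : Type) (gL : group_on L) (psi : forall i, G i -> L) : Prop :=
  cocone gG f gL psi /\
  forall (H : Type) (gH : group_on H) (chi : forall i, G i -> H),
    cocone gG f gH chi ->
    (exists u : L -> H, is_group_morph gL gH u /\
        forall i x, u (psi i x) = chi i x) /\
    (forall u v : L -> H,
        is_group_morph gL gH u -> is_group_morph gL gH v ->
        (forall i x, u (psi i x) = chi i x) ->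
        (forall i x, v (psi i x) = chi i x) ->
        forall y, u y = v y).

(* Main.v *)
Require Import Defs.
From Stdlib Require Import Reals Lra ClassicalEpsilon Classical FunctionalExtensionality PropExtensionality ProofIrrelevance.
From HB Require Import structures.
From mathcomp Require Import all_boot all_order all_algebra.
From mathcomp Require Import zify.

Module LA.
Set Implicit Arguments. Unset Strict Implicit. Unset Printing Implicit Defensive.
Import GRing.Theory.
Local Open Scope ring_scope.
Section K.
Variable F : fieldType.

Lemma eq_mx_rV m n (X Y : 'M[F]_(m, n)) :
  (forall u : 'rV_m, u *m X = u *m Y) -> X = Y.
Proof. by move=> h; apply/row_matrixP => i; rewrite !rowE h. Qed.

Definition krg m1 m2 n1 n2 (A : 'M[F]_(m1, m2)) (B : 'M[F]_(n1, n2))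
  : 'M[F]_(m2 * n1, m1 * n2) := lin_mx (mulmxr B \o mulmx A).

Lemma krg_rV m1 m2 n1 n2 (A : 'M[F]_(m1, m2)) (B : 'M[F]_(n1, n2)) u :
  u *m krg A B = mxvec (A *m vec_mx u *m B).
Proof. by rewrite /krg mul_rV_lin. Qed.

Lemma krg_vec m1 m2 n1 n2 (A : 'M[F]_(m1, m2)) (B : 'M[F]_(n1, n2)) M :
  mxvec M *m krg A B = mxvec (A *m M *m B).
Proof. by rewrite krg_rV mxvecK. Qed.

Lemma krg_mul m1 m2 n1 n2 k1 k2 (A : 'M[F]_(m1, m2)) (B : 'M[F]_(n1, n2))
  (A' : 'M[F]_(k1, m1)) (B' : 'M[F]_(n2, k2)) :
  krg A B *m krg A' B' = krg (A' *m A) (B *m B').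
Proof.
apply: eq_mx_rV => u; rewrite mulmxA !krg_rV mxvecK.
by rewrite !mulmxA.
Qed.

Lemma krg1 m n : krg (1%:M : 'M[F]_m) (1%:M : 'M[F]_n) = 1%:M.
Proof. by apply: eq_mx_rV => u; rewrite krg_rV mul1mx mulmx1 vec_mxK mulmx1. Qed.

Lemma krgBl m1 m2 n1 n2 (A A' : 'M[F]_(m1, m2)) (B : 'M[F]_(n1, n2)) :
  krg A B - krg A' B = krg (A - A') B.
Proof.
apply: eq_mx_rV => u; rewrite mulmxBr !krg_rV -linearB /=.
by rewrite -mulmxBl -mulmxBl.
Qed.

Lemma krgBr m1 m2 n1 n2 (A : 'M[F]_(m1, m2)) (B B' : 'M[F]_(n1, n2)) :
  krg A B - krg A B' = krg A (B - B').
Proof.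
apply: eq_mx_rV => u; rewrite mulmxBr !krg_rV -linearB /=.
by rewrite -mulmxBr.
Qed.

Lemma rank_krg m1 m2 n1 n2 (A : 'M[F]_(m1, m2)) (B : 'M[F]_(n1, n2)) :
  (\rank (krg A B) <= \rank A * \rank B)%N.
Proof.
rewrite -{1}(mulmx_base A) -{1}(mulmx_base B) -krg_mul.
apply: leq_trans (mxrankM_maxl _ _) _.
exact: rank_leq_col.
Qed.


Lemma krg_unit n p (A : 'M[F]_n) (B : 'M[F]_p) :
  A \in unitmx -> B \in unitmx -> krg A B \in unitmx.
Proof.
move=> uA uB.
have : krg A B *m krg (invmx A) (invmx B) = 1%:M.
  by rewrite krg_mul mulVmx // mulmxV // krg1.
by case/mulmx1_unit.
Qed.

Lemma rank_trB n (X : 'M[F]_n) : \rank (X^T - 1%:M) = \rank (X - 1%:M).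
Proof. by rewrite -(mxrank_tr (X - 1%:M)) linearB /= trmx1. Qed.

Lemma rank_invB n (Y : 'M[F]_n) : Y \in unitmx ->
  \rank (invmx Y - 1%:M) = \rank (Y - 1%:M).
Proof.
move=> uY.
have -> : invmx Y - 1%:M = (1%:M - Y) *m invmx Y.
  by rewrite mulmxBl mul1mx mulmxV.
rewrite mxrankMfree ?row_free_unit ?unitmx_inv //.
by rewrite -mxrank_opp opprB.
Qed.

Lemma key_rank n p (X : 'M[F]_n) (Y : 'M[F]_p) : Y \in unitmx ->
  (n * p <= \rank (krg X^T Y - 1%:M)%R
     + (n - \rank (X - 1%:M)%R) * (p - \rank (Y - 1%:M)%R)
     + \rank (X - 1%:M)%R * \rank (Y - 1%:M)%R)%N.
Proof.
move=> uY.
set P := X^T - 1%:M; set Q := invmx Y - 1%:M.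
rewrite -(rank_trB X) -(rank_invB uY) -/P -/Q.
set K := krg P (1%:M : 'M_p) - krg (1%:M : 'M_n) Q.
have eK : krg X^T Y - 1%:M = K *m krg (1%:M : 'M_n) Y.
  apply: eq_mx_rV => u; rewrite -(vec_mxK u); set M := vec_mx u.
  rewrite mulmxBr mulmx1 krg_vec mulmxA /K mulmxBr !krg_vec.
  rewrite -[in RHS]linearB /= krg_vec -linearB /=.
  congr mxvec.
  rewrite mulmx1 !mul1mx /P /Q !mulmxBl mul1mx mulmxBr mulmx1.
  rewrite mulmxBl -(mulmxA M (invmx Y)) mulVmx // mulmx1.
  by rewrite opprB addrA subrK.
have uK : krg (1%:M : 'M_n) Y \in unitmx by apply: krg_unit; rewrite ?unitmx1.
rewrite eK mxrankMfree ?row_free_unit //.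
set R := krg (1%:M : 'M_n) Q.
have hk := mxrank_mul_ker (kermx K) R.
rewrite mxrank_ker in hk.
have ha : (\rank (kermx K *m R) <= \rank P * \rank Q)%N.
  set S := krg (col_base P) (row_base Q).
  apply: leq_trans (mxrankS (_ : (kermx K *m R <= S)%MS)) (rank_leq_row S).
  apply/row_subP => i; rewrite row_mul.
  set w := row i (kermx K).
  have wK : w *m K = 0 by rewrite /w -row_mul mulmx_ker row0.
  rewrite -(vec_mxK w) in wK *; set M := vec_mx w.
  move/eqP: wK; rewrite mulmxBr !krg_vec -linearB /= mxvec_eq0 subr_eq0.
  rewrite mulmx1 mul1mx => /eqP PM.
  have hN : (M *m Q <= row_base Q)%MS.
    have -> : M *m Q = (M *m col_base Q) *m row_base Q by rewrite -mulmxA mulmx_base.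
    exact: submxMl.
  apply/submxP; exists (mxvec (row_base P *m M *m pinvmx (row_base Q))).
  rewrite krg_vec; congr mxvec.
  have e1 : col_base P *m (row_base P *m M *m pinvmx (row_base Q))
     = M *m Q *m pinvmx (row_base Q).
    by rewrite (mulmxA (col_base P)) (mulmxA (col_base P)) mulmx_base PM.
  by rewrite e1 mulmxKpV.
have hb : (\rank (kermx K :&: kermx R) <= (n - \rank P) * (p - \rank Q))%N.
  set Bk := row_base (kermx P^T); set Bq := row_base (kermx Q).
  set T := krg Bk^T Bq.
  apply: leq_trans (mxrankS (_ : (kermx K :&: kermx R <= T)%MS)) _.
    apply/row_subP => i; set w := row i _.
    have w1 : (w <= kermx K)%MS by apply: submx_trans (row_sub i _) (capmxSl _ _).
    have w2 : (w <= kermx R)%MS by apply: submx_trans (row_sub i _) (capmxSr _ _).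
    move/sub_kermxP: w1 => wK; move/sub_kermxP: w2 => wR.
    rewrite -(vec_mxK w) in wK wR *; set M := vec_mx w.
    move/eqP: wR; rewrite /R krg_vec mxvec_eq0 mul1mx => /eqP MQ.
    move/eqP: wK; rewrite mulmxBr !krg_vec -linearB /= mxvec_eq0 subr_eq0.
    rewrite mul1mx MQ mulmx1 => /eqP PM.
    have h1 : (M^T <= Bk)%MS.
      by rewrite /Bk eq_row_base; apply/sub_kermxP; rewrite -trmx_mul PM trmx0.
    have h2 : (M <= Bq)%MS by rewrite /Bq eq_row_base; apply/sub_kermxP.
    set W := (M^T *m pinvmx Bk)^T.
    have eM : M = Bk^T *m W.
      by rewrite /W -trmx_mul mulmxKpV // trmxK.
    apply/submxP; exists (mxvec (W *m pinvmx Bq)).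
    rewrite krg_vec; congr mxvec.
    by rewrite -[LHS](mulmxKpV h2) {1}eM !mulmxA.
  apply: leq_trans (rank_leq_row T) _.
  by rewrite /Bk /Bq !mxrank_ker mxrank_tr.
have hK : (\rank K <= n * p)%N by apply: rank_leq_row.
have hs : (n * p - \rank K <= \rank P * \rank Q + (n - \rank P) * (p - \rank Q))%N.
  by rewrite -hk; apply: leq_add.
move: hs; rewrite leq_subLR => hs.
by rewrite -addnA [X in (_ + X)%N]addnC.
Qed.


Fixpoint qpow (q m : nat) : nat := match m with 0 => 1%N | m'.+1 => (qpow q m' * q)%N end.

Lemma qpowE q m : qpow q m = (q ^ m)%N.
Proof. by elim: m => //= m ->; rewrite expnSr. Qed.

Fixpoint Psi q (B : 'M[F]_q) m : 'M[F]_(qpow q m) :=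
  match m with 0 => 1%:M | m'.+1 => krg (Psi B m')^T B end.

Lemma PsiM q (A B : 'M[F]_q) m : Psi (A *m B) m = Psi A m *m Psi B m.
Proof.
elim: m => [|m IH] /=; first by rewrite mulmx1.
by rewrite krg_mul IH trmx_mul.
Qed.

Lemma Psi1 q m : Psi (1%:M : 'M[F]_q) m = 1%:M.
Proof. by elim: m => //= m ->; rewrite trmx1 krg1. Qed.

Lemma Psi_unit q (A : 'M[F]_q) m : A \in unitmx -> Psi A m \in unitmx.
Proof.
move=> uA; have : Psi A m *m Psi (invmx A) m = 1%:M by rewrite -PsiM mulmxV // Psi1.
by case/mulmx1_unit.
Qed.

Lemma Psi_inv q (A : 'M[F]_q) m : A \in unitmx -> Psi (invmx A) m = invmx (Psi A m).
Proof.
move=> uA; have uP := Psi_unit m uA.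
have e : Psi A m *m Psi (invmx A) m = 1%:M by rewrite -PsiM mulmxV // Psi1.
by rewrite -[LHS]mul1mx -(mulVmx uP) -mulmxA e mulmx1.
Qed.

Lemma rank_Psi_err q (B : 'M[F]_q) m :
  (\rank (Psi B m - 1%:M)%R * q <= m * qpow q m * \rank (B - 1%:M)%R)%N.
Proof.
elim: m => [|m IH] /=; first by rewrite subrr mxrank0.
set X := Psi B m.
have e : krg X^T B - 1%:M = krg X^T (B - 1%:M) + krg (X^T - 1%:M) 1%:M.
  by rewrite -krgBr -krgBl krg1 addrA subrK.
have h1 := rank_krg X^T (B - 1%:M).
have h2 := rank_krg (X^T - 1%:M) (1%:M : 'M_q).
have h3 := rank_leq_row X^T.
rewrite mxrank1 rank_trB -/X in h2.
have h4 := mxrank_add (krg X^T (B - 1%:M)) (krg (X^T - 1%:M) 1%:M).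
rewrite -e in h4.
have h5 : (\rank (krg X^T B - 1%:M)%R <= qpow q m * \rank (B - 1%:M)%R + \rank (X - 1%:M)%R * q)%N.
  apply: leq_trans h4 _; apply: leq_add => //.
  by apply: leq_trans h1 _; rewrite leq_mul2r h3 orbT.
have h6 := leq_mul h5 (leqnn q).
have h7 := leq_mul IH (leqnn q).
rewrite /X in h6 h7 *; nia.
Qed.

Lemma rank_Psi_sep q (B : 'M[F]_q) m : B \in unitmx ->
  (2 * \rank (B - 1%:M)%R <= q)%N ->
  (2 * (qpow q m - \rank (Psi B m - 1%:M)%R) <= qpow q m + (q - 2 * \rank (B - 1%:M)%R) ^ m)%N.
Proof.
move=> uB h2r.
elim: m => [|m IH] /=; first by rewrite subrr mxrank0.
have hk := key_rank (Psi B m) uB.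
have he := rank_leq_row (Psi B m - 1%:M).
have h := leq_mul IH (leqnn (q - 2 * \rank (B - 1%:M)%R)).
rewrite expnSr.
move: hk he h h2r IH.
move: (\rank (krg (Psi B m)^T B - 1%:M)%R) (\rank (Psi B m - 1%:M)%R) (\rank (B - 1%:M)%R) => e' e r.
move=> *. nia.
Qed.

Lemma bern a b m : (a ^ m + m * b * a ^ m.-1 <= (a + b) ^ m)%N.
Proof.
elim: m => [|m IH]; first by rewrite /= mul0n addn0.
case: m IH => [|m] IH; first by rewrite /= !expn1 expn0 !muln1 mul1n.
have := leq_mul (leqnn (a + b)) IH.
rewrite /= !expnS.
nia.
Qed.

Lemma half_pow n r M m : (1 <= M)%N -> (n <= r * M)%N -> (M <= m)%N -> (r <= n)%N ->
  (2 * (n - r) ^ m <= n ^ m)%N.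
Proof.
move=> hM hn hm hr.
have hb := bern (n - r) r m.
rewrite subnK // in hb.
case: m hm hb => [|m] hm hb; first by lia.
rewrite /= in hb.
have h1 : ((n - r) ^ m.+1 <= n * (n - r) ^ m)%N by rewrite expnS leq_mul2r leq_subr orbT.
have h2 : (n * (n - r) ^ m <= m.+1 * r * (n - r) ^ m)%N.
  by rewrite leq_mul2r; apply/orP; right; have := leq_mul (leqnn r) hm; lia.
lia.
Qed.

Definition blk n (A : 'M[F]_n) : 'M[F]_(n + n) := block_mx A 0 0 1%:M.

Lemma blkM n (A B : 'M[F]_n) : blk (A *m B) = blk A *m blk B.
Proof.
by rewrite /blk mulmx_block !mulmx0 !mul0mx !addr0 !add0r mulmx1.
Qed.

Lemma blk1 n : blk (1%:M : 'M[F]_n) = 1%:M.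
Proof. by rewrite /blk -scalar_mx_block. Qed.

Lemma rank_blk n (A : 'M[F]_n) : \rank (blk A - 1%:M)%R = \rank (A - 1%:M)%R.
Proof.
rewrite /blk [X in (_ - X)%R](scalar_mx_block n n) opp_block_mx add_block_mx.
by rewrite !oppr0 !addr0 subrr rank_diag_block_mx mxrank0 addn0.
Qed.

Definition Theta n m (A : 'M[F]_n) := Psi (blk A) m.

Lemma ThetaM n m (A B : 'M[F]_n) : Theta m (A *m B) = Theta m A *m Theta m B.
Proof. by rewrite /Theta blkM PsiM. Qed.

Lemma Theta1 n m : Theta m (1%:M : 'M[F]_n) = 1%:M.
Proof. by rewrite /Theta blk1 Psi1. Qed.

Lemma Theta_unit n m (A : 'M[F]_n) : A \in unitmx -> Theta m A \in unitmx.
Proof.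
move=> uA; have : Theta m A *m Theta m (invmx A) = 1%:M by rewrite -ThetaM mulmxV // Theta1.
by case/mulmx1_unit.
Qed.

Lemma Theta_inv n m (A : 'M[F]_n) : A \in unitmx -> Theta m (invmx A) = invmx (Theta m A).
Proof.
move=> uA; have uP := Theta_unit m uA.
have e : Theta m A *m Theta m (invmx A) = 1%:M by rewrite -ThetaM mulmxV // Theta1.
by rewrite -[LHS]mul1mx -(mulVmx uP) -mulmxA e mulmx1.
Qed.

Lemma Theta_err n m (A : 'M[F]_n) :
  (\rank (Theta m A - 1%:M)%R * (n + n) <= m * qpow (n + n) m * \rank (A - 1%:M)%R)%N.
Proof. by rewrite /Theta -[X in (_ <= _ * X)%N]rank_blk; apply: rank_Psi_err. Qed.

Lemma blk_unit n (A : 'M[F]_n) : A \in unitmx -> blk A \in unitmx.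
Proof.
move=> uA; have : blk A *m blk (invmx A) = 1%:M by rewrite -blkM mulmxV // blk1.
by case/mulmx1_unit.
Qed.

Lemma Theta_sep n m M (A : 'M[F]_n) : A \in unitmx -> (1 <= M)%N ->
  (n <= \rank (A - 1%:M)%R * M)%N -> (M <= m)%N ->
  (qpow (n + n) m <= 4 * \rank (Theta m A - 1%:M)%R)%N.
Proof.
move=> uA hM hn hm.
have hr : (\rank (A - 1%:M)%R <= n)%N by apply: rank_leq_row.
have hs := rank_Psi_sep m (blk_unit uA).
rewrite rank_blk in hs.
have hs' := hs (_ : (2 * \rank (A - 1%:M)%R <= n + n)%N).
have hh := half_pow hM hn hm hr.
have he := rank_leq_row (Theta m A - 1%:M).
rewrite /Theta in he *.
move: hs' he hh.
move: (\rank (Psi (blk A) m - 1%:M)%R) => e.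
rewrite qpowE.
have -> : (n + n - 2 * \rank (A - 1%:M)%R = 2 * (n - \rank (A - 1%:M)%R))%N by lia.
have -> : (n + n = 2 * n)%N by lia.
rewrite !expnMn.
have h0 : (2 * \rank (A - 1%:M)%R <= 2 * n)%N by lia.
move=> h1 h2 h3; have h4 := h1 h0.
have h5 := leq_mul (leqnn (2 ^ m)%N) h3.
move: h2 h4 h5; move: (2 ^ m)%N (n ^ m)%N ((n - \rank (A - 1%:M)%R) ^ m)%N => a b c.
move=> *; nia.
Qed.
End K.

End LA.
Import LA.

Module RH.
Set Implicit Arguments. Unset Strict Implicit. Unset Printing Implicit Defensive.
Local Open Scope R_scope.

Lemma rho_lt_nat (r n L : nat) : (0 < n)%N -> Rabs (INR r / INR n) < / INR L -> (0 < L)%N ->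
  (r * L < n)%N.
Proof.
move=> hn h hL.
have hn' : 0 < INR n by apply: lt_0_INR; apply/ltP.
have hL' : 0 < INR L by apply: lt_0_INR; apply/ltP.
rewrite Rabs_pos_eq in h; last by by apply: Rle_mult_inv_pos => //; apply: pos_INR.
have h2 : INR r * INR L < INR n.
  apply (Rmult_lt_compat_r (INR L * INR n)) in h; last by apply: Rmult_lt_0_compat.
  field_simplify in h; lra.
rewrite -mult_INR in h2; apply/ltP; exact: INR_lt.
Qed.

Lemma rho_ge_nat (r n M : nat) (eps : R) : (0 < n)%N -> ~ (Rabs (INR r / INR n) < eps) ->
  / INR M < eps -> (0 < M)%N -> (n <= r * M)%N.
Proof.
move=> hn h hM hM0.
have hn' : 0 < INR n by apply: lt_0_INR; apply/ltP.
have hM' : 0 < INR M by apply: lt_0_INR; apply/ltP.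
rewrite Rabs_pos_eq in h; last by by apply: Rle_mult_inv_pos => //; apply: pos_INR.
have h1 : / INR M < INR r / INR n by lra.
have h2 : INR n < INR r * INR M.
  apply (Rmult_lt_compat_r (INR M * INR n)) in h1; last by apply: Rmult_lt_0_compat.
  field_simplify in h1; lra.
rewrite -mult_INR in h2; apply: ltnW; apply/ltP; exact: INR_lt.
Qed.

Lemma rho_small (r n L K1 : nat) (eps : R) : (0 < n)%N -> (r * L <= n)%N -> (K1 <= L)%N ->
  (0 < K1)%N -> / INR K1 < eps -> Rabs (INR r / INR n) < eps.
Proof.
move=> hn hr hK hK0 he.
have hn' : 0 < INR n by apply: lt_0_INR; apply/ltP.
have hK' : 0 < INR K1 by apply: lt_0_INR; apply/ltP.
have hL' : INR K1 <= INR L by apply: le_INR; apply/leP.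
have h1 : INR r * INR L <= INR n by rewrite -mult_INR; apply: le_INR; apply/leP.
rewrite Rabs_pos_eq; last by apply: Rle_mult_inv_pos => //; apply: pos_INR.
apply: Rle_lt_trans he.
have h2 : INR r * INR K1 <= INR n.
  apply: Rle_trans h1; apply: Rmult_le_compat_l => //; apply: pos_INR.
apply (Rmult_le_reg_r (INR n * INR K1)); first by apply: Rmult_lt_0_compat.
field_simplify; try lra.
Qed.

Lemma rho_big (r n : nat) : (0 < n)%N -> (n <= 4 * r)%N -> ~ (Rabs (INR r / INR n) < / 4).
Proof.
move=> hn hr h.
have hn' : 0 < INR n by apply: lt_0_INR; apply/ltP.
have h1 : INR n <= 4 * INR r.
  have -> : 4 = INR 4 by simpl; lra.
  by rewrite -mult_INR; apply: le_INR; apply/leP.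
rewrite Rabs_pos_eq in h; last by apply: Rle_mult_inv_pos => //; apply: pos_INR.
apply (Rmult_lt_compat_r (4 * INR n)) in h; last lra.
field_simplify in h; lra.
Qed.

End RH.
Import RH.

Module P2.
Set Implicit Arguments. Unset Strict Implicit. Unset Printing Implicit Defensive.
Import GRing.Theory.
Local Open Scope ring_scope.

Section UF.
Variable U : (nat -> Prop) -> Prop.
Hypothesis hU : nonprincipal_ultrafilter U.

Lemma U_mono (A B : nat -> Prop) : U A -> (forall k, A k -> B k) -> U B.
Proof. by case: hU => _ [_ [h _]]; apply: h. Qed.

Lemma U_and (A B : nat -> Prop) : U A -> U B -> U (fun k => A k /\ B k).
Proof. by case: hU => _ [_ [_ [h _]]]; apply: h. Qed.

Lemma U_ne (A : nat -> Prop) : U A -> exists k, A k.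
Proof.
move=> hA; apply: NNPP => hn; have [_ [h0 _]] := hU; apply: h0.
exact: (@U_mono A (fun _ => False) hA (fun k hk => hn (ex_intro _ k hk))).
Qed.

Lemma U_not (A : nat -> Prop) : ~ U A -> U (fun k => ~ A k).
Proof. by move=> hA; have [_ [_ [_ [_ [h _]]]]] := hU; case: (h A). Qed.

Lemma U_T : U (fun _ => True).
Proof. by case: hU. Qed.

Lemma U_ge K : U (fun k => (K <= k)%N).
Proof.
elim: K => [|K IH]; first exact: (@U_mono _ (fun k => (0 <= k)%N) U_T (fun k _ => leq0n k)).
have h1 : U (fun k => k <> K).
  by apply: U_not; have [_ [_ [_ [_ [_ h]]]]] := hU; apply: h.
refine (@U_mono _ _ (U_and IH h1) _) => k [h h']; rewrite ltn_neqAle h andbT; apply/eqP => e; apply: h'.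
by rewrite e.
Qed.

Lemma U_fin (I : finType) (A : I -> nat -> Prop) :
  (forall i, U (A i)) -> U (fun k => forall i, A i k).
Proof.
move=> hA.
suff : forall s : seq I, U (fun k => forall i, i \in s -> A i k).
  by move=> /(_ (enum I)) h; refine (@U_mono _ _ h _) => k hk i; apply: hk; rewrite mem_enum.
elim=> [|x s IH]; first exact: (@U_mono _ _ U_T (fun k _ i (hi : i \in [::]) => False_ind _ (notF hi))).
refine (@U_mono _ _ (U_and (hA x) IH) _) => k [h1 h2] i; rewrite inE => /orP[/eqP->//|].
exact: h2.
Qed.

End UF.

Lemma leq_self_pow a m : (0 < a)%N -> (0 < m)%N -> (a <= a ^ m)%N.
Proof.
move=> ha; case: m => // m _; rewrite expnS; rewrite -{1}(muln1 a) leq_mul2l.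
by rewrite expn_gt0 ha orbT.
Qed.

Lemma approx (T : Type) (gT : group_on T) : linear_sofic gT ->
  forall (I : finType) (c : I -> T) (K N : nat), exists n (th : T -> 'M[Cplx]_n),
   [/\ (N <= n)%N, (forall g, th g \in unitmx),
       (forall i j, (\rank (th (gmul gT (c i) (c j)) *m invmx (th (c i) *m th (c j)) - 1%:M)%R * K <= n)%N)
     & (forall i j, c i <> c j -> (n <= 4 * \rank (th (c i) *m invmx (th (c j)) - 1%:M)%R)%N)].
Proof.
move=> [_ [U [nn [phi [hU hinf hunit hmul hinj]]]]] I c K N.
have hsep : forall x : I * I, exists M : nat, (0 < M)%N /\
   U (fun k => c x.1 <> c x.2 -> (0 < nn k)%N ->
      (nn k <= \rank (phi (c x.1) k *m invmx (phi (c x.2) k) - 1%:M)%R * M)%N).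
  move=> [i j] /=; case: (classic (c i = c j)) => e.
    by exists 1%N; split => //; exact: (@U_mono _ hU _ _ (U_T hU) (fun k _ h => False_ind _ (h e))).
  have hn := hinj _ _ e; rewrite /in_kernel /ulim0 in hn.
  have [eps [heps hne]] : exists eps : R, Rlt 0 eps /\
      ~ U (fun k => Rlt (Rabs (rho (phi (c i) k *m invmx (phi (c j) k) - 1%:M)%R)) eps).
    apply: NNPP => h; apply: hn => eps heps; apply: NNPP => h2; apply: h; exists eps; split => //.
  have [M [hM hM0]] := archimed_cor1 eps heps.
  exists M; split; first by apply/ltP.
  refine (@U_mono _ hU _ _ (U_not hU hne) _) => k hk _ hnk.
  rewrite /rho in hk; exact: (@rho_ge_nat _ _ _ _ hnk hk hM (introT ltP hM0)).
pose Mf := fun x => proj1_sig (constructive_indefinite_description _ (hsep x)).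
have hMf x : (0 < Mf x)%N /\ _ := proj2_sig (constructive_indefinite_description _ (hsep x)).
pose M0 := (\max_(x : I * I) Mf x).+1.
have hM0 x : (Mf x <= M0)%N by apply: leq_trans (leq_bigmax x) (leqnSn _).
pose L := (M0 * K).+1.
have herr : forall x : I * I, U (fun k => (0 < nn k)%N ->
    (\rank (phi (gmul gT (c x.1) (c x.2)) k *m invmx (phi (c x.1) k *m phi (c x.2) k) - 1%:M)%R * L < nn k)%N).
  move=> x.
  have hL : Rlt 0 (Rinv (INR L)) by apply: Rinv_0_lt_compat; apply: lt_0_INR; lia.
  refine (@U_mono _ hU _ _ (hmul (c x.1) (c x.2) _ hL) _) => k hk hpos.
  rewrite /rho in hk; exact: (@rho_lt_nat _ _ _ hpos hk (ltn0Sn _)).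
have [K0 hK0] := hinf (maxn N 1).
have hbig : U (fun k => (maxn N 1 <= nn k)%N) := @U_mono _ hU _ _ (U_ge hU K0) (fun k hk => hK0 k hk).
have hall := U_and hU hbig (U_and hU (U_fin hU herr) (U_fin hU (fun x => proj2 (hMf x)))).
have [k [hk1 [hk2 hk3]]] := U_ne hU hall.
move: hk1 hk2 hk3; set nk := nn k => hk1 hk2 hk3.
have hpos : (0 < nk)%N by apply: leq_trans hk1; rewrite leq_max orbT.
have hM0p : (0 < M0)%N by [].
exists (qpow (nk + nk) M0), (fun g => Theta M0 (phi g k)); split.
- rewrite qpowE; apply: leq_trans (leq_self_pow (_ : 0 < nk + nk)%N hM0p); last by lia.
  by move: hk1; rewrite geq_max => /andP[h _]; lia.
- by move=> g; apply: Theta_unit; apply: hunit.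
- move=> i j.
  rewrite -ThetaM -Theta_inv ?unitmx_mul ?hunit // -ThetaM.
  have h1 := Theta_err M0 (phi (gmul gT (c i) (c j)) k *m invmx (phi (c i) k *m phi (c j) k)).
  have h2 := hk2 (i, j) hpos; rewrite /= in h2.
  move: h1 h2; rewrite /L.
  move: (\rank (phi (gmul gT (c i) (c j)) k *m invmx (phi (c i) k *m phi (c j) k) - 1%:M)%R) => r.
  move: (\rank (Theta M0 (phi (gmul gT (c i) (c j)) k *m invmx (phi (c i) k *m phi (c j) k)) - 1%:M)%R) => e.
  move: (qpow (nk + nk) M0) => Q h1 h2.
  have h3 : (M0 * K * r <= nk)%N by lia.
  have h4 := leq_mul h1 (leqnn K).
  have h5 := leq_mul h3 (leqnn Q).
  have h6 : (e * K * (nk + nk) <= Q * (nk + nk))%N by nia.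
  by rewrite leq_pmul2r in h6; lia.
- move=> i j hij.
  rewrite -Theta_inv ?hunit // -ThetaM.
  apply: (Theta_sep (M := M0)) => //.
    by rewrite unitmx_mul hunit unitmx_inv hunit.
  have h := hk3 (i, j) hij hpos; rewrite /= in h.
  apply: leq_trans h _; exact: leq_mul (leqnn _) (hM0 (i, j)).
Qed.

End P2.
Import P2.

Module P3.
Set Implicit Arguments. Unset Strict Implicit. Unset Printing Implicit Defensive.

Section Grp.
Variables (T : Type) (g : group_on T).
Local Notation "x * y" := (gmul g x y).
Local Notation "1" := (gone g).

Lemma gmulVr x : x * ginv g x = 1.
Proof.
have e : ginv g (ginv g x) * ginv g x = 1 := gmulV g _.
rewrite -[LHS](gmul1 g) -{1}e -gmulA (gmulA g (ginv g x) x) gmulV gmul1.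
by rewrite e.
Qed.

Lemma gmulr1 x : x * 1 = x.
Proof. by rewrite -(gmulV g x) gmulA gmulVr gmul1. Qed.

Lemma gcancel_l a x y : a * x = a * y -> x = y.
Proof.
move=> e; rewrite -(gmul1 g x) -(gmul1 g y) -(gmulV g a) -!gmulA.
by rewrite e.
Qed.
End Grp.

Lemma morph1 T U (gT : group_on T) (gU : group_on U) (h : T -> U) :
  is_group_morph gT gU h -> h (gone gT) = gone gU.
Proof.
move=> hm; apply: (@gcancel_l _ gU (h (gone gT))).
by rewrite -hm gmul1 gmulr1.
Qed.

Lemma morphV T U (gT : group_on T) (gU : group_on U) (h : T -> U) x :
  is_group_morph gT gU h -> h (ginv gT x) = ginv gU (h x).
Proof.
move=> hm; apply: (@gcancel_l _ gU (h x)).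
by rewrite -hm gmulVr gmulVr (morph1 hm).
Qed.

Section DL.
Variables (G : nat -> Type) (gG : forall i, group_on (G i))
  (f : forall i j, (i <= j)%N -> G i -> G j).
Hypothesis hsys : directed_system gG f.
Variables (L : Type) (gL : group_on L) (psi : forall i, G i -> L).
Arguments f : clear implicits.
Arguments psi : clear implicits.
Hypothesis hL : direct_limit gG f gL psi.

Lemma f_irr i j (h h' : (i <= j)%N) x : f _ _ h x = f _ _ h' x.
Proof. by rewrite (bool_irrelevance h h'). Qed.

Lemma f_morph i j (h : (i <= j)%N) : is_group_morph (gG i) (gG j) (f _ _ h).
Proof. by case: hsys => hm _ _; apply: hm. Qed.

Lemma f_comp i j k (hij : (i <= j)%N) (hjk : (j <= k)%N) (hik : (i <= k)%N) x :
  f _ _ hjk (f _ _ hij x) = f _ _ hik x.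
Proof. by case: hsys => _ _ hc; apply: hc. Qed.

Lemma psi_morph i : is_group_morph (gG i) gL (psi i).
Proof. by case: hL => [[hm _] _]. Qed.

Lemma psi_f i j (h : (i <= j)%N) x : psi j (f _ _ h x) = psi i x.
Proof. by case: hL => [[_ hc] _]. Qed.

Definition Simg := {y : L | exists i x, psi i x = y}.

Lemma Simg_mul_proof (a b : Simg) : exists i x, psi i x = gmul gL (proj1_sig a) (proj1_sig b).
Proof.
case: a => y1 [i1 [x1 e1]]; case: b => y2 [i2 [x2 e2]] /=.
exists (maxn i1 i2), (gmul (gG _) (f _ _ (leq_maxl i1 i2) x1) (f _ _ (leq_maxr i1 i2) x2)).
by rewrite psi_morph !psi_f e1 e2.
Qed.

Lemma Simg_one_proof : exists i x, psi i x = gone gL.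
Proof. by exists 0%N, (gone (gG 0)); rewrite (morph1 (@psi_morph 0)). Qed.

Lemma Simg_inv_proof (a : Simg) : exists i x, psi i x = ginv gL (proj1_sig a).
Proof.
case: a => y [i [x e]] /=; exists i, (ginv (gG i) x).
by rewrite (morphV _ (@psi_morph i)) e.
Qed.

Definition Smul (a b : Simg) : Simg := exist _ _ (Simg_mul_proof a b).
Definition Sone : Simg := exist _ _ Simg_one_proof.
Definition Sinv (a : Simg) : Simg := exist _ _ (Simg_inv_proof a).

Lemma Simg_eq (a b : Simg) : proj1_sig a = proj1_sig b -> a = b.
Proof.
case: a => y1 p1; case: b => y2 p2 /= e; subst y2.
by rewrite (proof_irrelevance _ p1 p2).
Qed.

Definition gS : group_on Simg.
Proof.
refine (@GroupOn Simg Smul Sone Sinv _ _ _).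
- by move=> x y z; apply: Simg_eq; rewrite /= gmulA.
- by move=> x; apply: Simg_eq; rewrite /= gmul1.
- by move=> x; apply: Simg_eq; rewrite /= gmulV.
Defined.

Lemma psi_surj y : exists i x, psi i x = y.
Proof.
case: hL => hc huniv.
pose chi i x : Simg := exist _ (psi i x) (ex_intro _ i (ex_intro _ x erefl)).
have hcc : cocone gG f gS chi.
  split.
    by move=> i a b; apply: Simg_eq; rewrite /= psi_morph.
  by move=> i j h x; apply: Simg_eq; rewrite /= psi_f.
have [[u [hu1 hu2]] _] := huniv _ _ _ hcc.
have [_ huniq] := huniv _ _ _ hc.
pose v y := proj1_sig (u y).
have hv : is_group_morph gL gL v by move=> a b; rewrite /v hu1.
have hid : is_group_morph gL gL id by [].
have e : v y = y.
  by apply: (huniq v id hv hid _ (fun i x => erefl) y) => i x; rewrite /v hu2.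
rewrite -e; exact: (proj2_sig (u y)).
Qed.

Definition Pr := forall j, G j.
Definition pmul (s t : Pr) : Pr := fun j => gmul (gG j) (s j) (t j).
Definition pone : Pr := fun j => gone (gG j).
Definition pinv (s : Pr) : Pr := fun j => ginv (gG j) (s j).
Definition Req (s t : Pr) : Prop := exists J, forall j, (J <= j)%N -> s j = t j.

Lemma Req_refl s : Req s s. Proof. by exists 0%N. Qed.
Lemma Req_sym s t : Req s t -> Req t s.
Proof. by case=> J h; exists J => j hj; rewrite h. Qed.
Lemma Req_trans s t u : Req s t -> Req t u -> Req s u.
Proof.
case=> J1 h1 [J2 h2]; exists (maxn J1 J2) => j hj.
by rewrite h1 ?h2 //; move: hj; rewrite geq_max => /andP[].
Qed.
Lemma Req_mul s s' t t' : Req s s' -> Req t t' -> Req (pmul s t) (pmul s' t').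
Proof.
case=> J1 h1 [J2 h2]; exists (maxn J1 J2) => j; rewrite geq_max => /andP[a b].
by rewrite /pmul h1 ?h2.
Qed.
Lemma Req_inv s s' : Req s s' -> Req (pinv s) (pinv s').
Proof. by case=> J h; exists J => j hj; rewrite /pinv h. Qed.
Lemma Req_pt s t : (forall j, s j = t j) -> Req s t.
Proof. by move=> h; exists 0%N => j _. Qed.

Definition Qt := {P : Pr -> Prop | exists s, P = Req s}.
Definition cls (s : Pr) : Qt := exist _ (Req s) (ex_intro _ s erefl).
Definition rep (q : Qt) : Pr := proj1_sig (constructive_indefinite_description _ (proj2_sig q)).
Lemma rep_spec q : proj1_sig q = Req (rep q).
Proof. exact: (proj2_sig (constructive_indefinite_description _ (proj2_sig q))). Qed.

Lemma Qt_eq (a b : Qt) : proj1_sig a = proj1_sig b -> a = b.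
Proof.
case: a => y1 p1; case: b => y2 p2 /= e; subst y2.
by rewrite (proof_irrelevance _ p1 p2).
Qed.

Lemma cls_rep q : cls (rep q) = q.
Proof. by apply: Qt_eq; rewrite /= -rep_spec. Qed.

Lemma cls_eq s t : Req s t -> cls s = cls t.
Proof.
move=> h; apply: Qt_eq => /=; apply: functional_extensionality => u.
apply: propositional_extensionality; split.
  by apply: Req_trans (Req_sym h).
by apply: Req_trans h.
Qed.

Lemma cls_inj s t : cls s = cls t -> Req s t.
Proof.
move=> e; have : proj1_sig (cls s) t = proj1_sig (cls t) t by rewrite e.
by rewrite /= => ->; apply: Req_refl.
Qed.

Lemma Req_rep_cls s : Req (rep (cls s)) s.
Proof. by apply: cls_inj; rewrite cls_rep. Qed.

Definition qmul (a b : Qt) : Qt := cls (pmul (rep a) (rep b)).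
Definition qone : Qt := cls pone.
Definition qinv (a : Qt) : Qt := cls (pinv (rep a)).

Lemma cls_mul s t : qmul (cls s) (cls t) = cls (pmul s t).
Proof. by apply: cls_eq; apply: Req_mul; apply: Req_rep_cls. Qed.
Lemma cls_inv s : qinv (cls s) = cls (pinv s).
Proof. by apply: cls_eq; apply: Req_inv; apply: Req_rep_cls. Qed.

Definition gQ : group_on Qt.
Proof.
refine (@GroupOn Qt qmul qone qinv _ _ _).
- move=> a b c; rewrite -(cls_rep a) -(cls_rep b) -(cls_rep c) !cls_mul.
  by apply: cls_eq; apply: Req_pt => j; rewrite /pmul gmulA.
- move=> a; rewrite -(cls_rep a) /qone cls_mul.
  by apply: cls_eq; apply: Req_pt => j; rewrite /pmul /pone gmul1.
- move=> a; rewrite -(cls_rep a) cls_inv cls_mul.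
  by apply: cls_eq; apply: Req_pt => j; rewrite /pmul /pinv /pone gmulV.
Defined.

Definition push i (x : G i) : Pr := fun j =>
  match @idP (i <= j)%N with ReflectT h => f i j h x | ReflectF _ => gone (gG j) end.

Lemma push_le i (x : G i) j (h : (i <= j)%N) : push x j = f i j h x.
Proof.
rewrite /push; destruct (@idP (i <= j)%N) as [h'|h']; first by apply: f_irr.
by case: h'.
Qed.

Lemma psi_merge i (a b : G i) : psi i a = psi i b ->
  exists J (h : (i <= J)%N), f i J h a = f i J h b.
Proof.
move=> e.
case: hL => hc huniv.
pose chi i (x : G i) : Qt := cls (push x).
have hcc : cocone gG f gQ chi.
  split.
    move=> i0 x y; rewrite /chi /= cls_mul; apply: cls_eq.
    exists i0 => j hj; rewrite /pmul !(push_le _ hj).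
    by apply: f_morph.
  move=> i0 j h x; rewrite /chi; apply: cls_eq; exists j => j' hj'.
  have hij' : (i0 <= j')%N by apply: leq_trans h hj'.
  by rewrite (push_le _ hj') (push_le _ hij') f_comp.
have [[u [hu1 hu2]] _] := huniv _ _ _ hcc.
have : chi i a = chi i b by rewrite -!hu2 e.
move/cls_inj => [J hJ].
exists (maxn i J), (leq_maxl i J).
by rewrite -!push_le hJ // leq_maxr.
Qed.
End DL.

End P3.
Import P3.

Module P4.
Set Implicit Arguments. Unset Strict Implicit. Unset Printing Implicit Defensive.

Notation cid h := (constructive_indefinite_description _ h).

Section Main.
Variables (G : nat -> Type) (gG : forall i, group_on (G i))
  (f : forall i j, (i <= j)%N -> G i -> G j).
Hypothesis hsys : directed_system gG f.
Variables (L : Type) (gL : group_on L) (psi : forall i, G i -> L).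
Hypothesis hL : direct_limit gG f gL psi.
Arguments f : clear implicits.
Arguments psi : clear implicits.

Definition cand j k (x : 'I_k.+1 -> G j) (t : 'I_k.+1 * option 'I_k.+1) : G j :=
  match t.2 with None => x t.1 | Some b => gmul (gG j) (x t.1) (x b) end.

Lemma stage (e : nat -> L) k : exists j (x : 'I_k.+1 -> G j),
  (forall a : 'I_k.+1, psi j (x a) = e a) /\
  (forall t t', psi j (cand x t) = psi j (cand x t') -> cand x t = cand x t').
Proof.
have hl : forall a : 'I_k.+1, exists i x, psi i x = e a := fun a => psi_surj hL (e a).
pose ia a := proj1_sig (cid (hl a)).
pose xa a : G (ia a) := proj1_sig (cid (proj2_sig (cid (hl a)))).
have hxa a : psi (ia a) (xa a) = e a := proj2_sig (cid (proj2_sig (cid (hl a)))).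
pose j0 := \max_(a : 'I_k.+1) ia a.
have hj0 a : (ia a <= j0)%N := leq_bigmax a.
pose x0 a := f (ia a) j0 (hj0 a) (xa a).
have hx0 a : psi j0 (x0 a) = e a by rewrite /x0 (psi_f hL).
have hm : forall p : (('I_k.+1 * option 'I_k.+1) * ('I_k.+1 * option 'I_k.+1))%type,
    exists J (h : (j0 <= J)%N), psi j0 (cand x0 p.1) = psi j0 (cand x0 p.2) ->
      f j0 J h (cand x0 p.1) = f j0 J h (cand x0 p.2).
  move=> p; case: (classic (psi j0 (cand x0 p.1) = psi j0 (cand x0 p.2))) => e0.
    by have [J [h hJ]] := psi_merge hsys hL e0; exists J, h.
  by exists j0, (leqnn j0).
pose Jp p := proj1_sig (cid (hm p)).
pose hp p : (j0 <= Jp p)%N := proj1_sig (cid (proj2_sig (cid (hm p)))).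
have hpp p := proj2_sig (cid (proj2_sig (cid (hm p)))).
pose J := maxn j0 (\max_p Jp p).
have hJ : (j0 <= J)%N := leq_maxl _ _.
have hJpJ p : (Jp p <= J)%N by apply: leq_trans (leq_bigmax p) (leq_maxr _ _).
exists J, (fun a => f j0 J hJ (x0 a)); split.
  by move=> a; rewrite (psi_f hL).
have hc t : cand (fun a => f j0 J hJ (x0 a)) t = f j0 J hJ (cand x0 t).
  by case: t => a [b|] //=; rewrite (f_morph hsys).
move=> t t'; rewrite !hc !(psi_f hL) => e0.
have e1 := hpp (t, t') e0.
rewrite -(f_comp hsys (hp (t, t')) (hJpJ (t, t')) hJ (cand x0 t)).
rewrite -(f_comp hsys (hp (t, t')) (hJpJ (t, t')) hJ (cand x0 t')).
by rewrite e1.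
Qed.


Lemma main_aux (hG : forall i, linear_sofic (gG i)) : linear_sofic gL.
Proof.
have hcnt i : exists cnt : G i -> nat, forall x y, cnt x = cnt y -> x = y := (hG i).1.
pose cnt i := proj1_sig (cid (hcnt i)).
have hcntI i : forall x y, cnt i x = cnt i y -> x = y := proj2_sig (cid (hcnt i)).
pose dec i n : G i := match excluded_middle_informative (exists x, cnt i x = n) with
  | left h => proj1_sig (cid h) | right _ => gone (gG i) end.
have hdec i x : dec i (cnt i x) = x.
  rewrite /dec; case: excluded_middle_informative => [h|h].
    by apply: hcntI; exact: (proj2_sig (cid h)).
  by exfalso; apply: h; exists x.
pose e n : L := match (unpickle n : option (nat * nat)) with
  | Some p => psi p.1 (dec p.1 p.2) | None => gone gL end.
have he y : exists n, e n = y.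
  have [i [x <-]] := psi_surj hL y.
  by exists (pickle (i, cnt i x)); rewrite /e pickleK /= hdec.
split.
  exists (fun y => proj1_sig (cid (he y))) => y1 y2 h.
  by rewrite -(proj2_sig (cid (he y1))) -(proj2_sig (cid (he y2))) h.
have [_ [U [_ [_ [hU _ _ _ _]]]]] := hG 0%N.
have st k := stage e k.
pose jk k := proj1_sig (cid (st k)).
pose xk k : 'I_k.+1 -> G (jk k) := proj1_sig (cid (proj2_sig (cid (st k)))).
have hxk k : (forall a : 'I_k.+1, psi (jk k) (xk k a) = e a) /\
    (forall t t', psi (jk k) (cand (xk k) t) = psi (jk k) (cand (xk k) t') ->
       cand (xk k) t = cand (xk k) t') := proj2_sig (cid (proj2_sig (cid (st k)))).
have ap k := approx (hG (jk k)) (cand (xk k)) k.+1 k.+1.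
pose nk k := proj1_sig (cid (ap k)).
pose thk k : G (jk k) -> 'M[Cplx]_(nk k) := proj1_sig (cid (proj2_sig (cid (ap k)))).
have hth k := proj2_sig (cid (proj2_sig (cid (ap k)))).
pose lam k y : G (jk k) := match excluded_middle_informative
    (exists t, psi (jk k) (cand (xk k) t) = y) with
  | left h => cand (xk k) (proj1_sig (cid h)) | right _ => gone (gG (jk k)) end.
have hlam k t : lam k (psi (jk k) (cand (xk k) t)) = cand (xk k) t.
  rewrite /lam; case: excluded_middle_informative => [h|h].
    by apply: (hxk k).2; exact: (proj2_sig (cid h)).
  by exfalso; apply: h; exists t.
have hlamE k (a : 'I_k.+1) : lam k (e a) = xk k a.
  by rewrite -((hxk k).1 a); exact: (hlam k (a, None)).
have hlamM k (a b : 'I_k.+1) : lam k (gmul gL (e a) (e b)) = gmul (gG (jk k)) (xk k a) (xk k b).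
  by rewrite -!((hxk k).1) -(psi_morph hL); exact: (hlam k (a, Some b)).
exists U, nk, (fun y k => thk k (lam k y)); split.
- exact: hU.
- move=> N; exists N => k hk; have [h1 _ _ _] := hth k.
  by apply: leq_trans hk (leq_trans (leqnSn k) h1).
- by move=> g k; have [_ h2 _ _] := hth k; exact: h2.
- move=> g h; have [a0 ea] := he g; have [b0 eb] := he h.
  move=> eps heps; have [K1 [hK1 hK10]] := archimed_cor1 eps heps.
  apply: (U_mono hU (U_ge hU (maxn (maxn a0 b0) K1))) => k hk.
  move: hk; rewrite !geq_max => /andP[/andP[ha hb] hK].
  have ea' : g = e (@inord k a0) by rewrite inordK.
  have eb' : h = e (@inord k b0) by rewrite inordK.
  rewrite ea' eb' hlamM !hlamE.
  have [h1 _ h3 _] := hth k.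
  have := h3 (inord a0, None) (inord b0, None); rewrite /cand /= => h3'.
  rewrite /rho; apply: (@rho_small _ _ k.+1 K1 eps _ h3' _ _ hK1).
  + by apply: leq_trans h1.
  + by apply: leq_trans hK _.
  + by apply/ltP.
- move=> g h gh hk; have [a0 ea] := he g; have [b0 eb] := he h.
  have h4 : Rlt 0 (Rinv 4) by lra.
  have [k [hk1 hk2]] := U_ne hU (U_and hU (hk _ h4) (U_ge hU (maxn a0 b0))).
  move: hk2; rewrite geq_max => /andP[ha hb].
  have ea' : g = e (@inord k a0) by rewrite inordK.
  have eb' : h = e (@inord k b0) by rewrite inordK.
  rewrite /= ea' eb' !hlamE /rho in hk1.
  have [h1 _ _ h4'] := hth k.
  have hne : cand (xk k) (inord a0, None) <> cand (xk k) (inord b0, None).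
    rewrite /cand /= => ex; apply: gh; rewrite ea' eb' -!((hxk k).1) ex //.
  apply: (@rho_big _ _ _ (h4' _ _ hne) hk1).
  by apply: leq_trans h1.
Qed.

End Main.

End P4.
Import P4.

Unset Implicit Arguments. Set Strict Implicit. Set Printing Implicit Defensive.

Theorem mainTheorem15
  (G : nat -> Type) (gG : forall i, group_on (G i))
  (f : forall i j, (i <= j)%N -> G i -> G j)
  (hsys : directed_system gG f)
  (hG : forall i, linear_sofic (gG i))
  (L : Type) (gL : group_on L) (psi : forall i, G i -> L)
  (hL : direct_limit gG f gL psi) :
  linear_sofic gL.
Proof.
exact: (main_aux hsys hL hG).
Qed.
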